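(* Consider difference logic. Let $G$ be a finite set of difference-logic predicates and let $m$ be the number of variables occurring in $G$. Then $D_T(G) \le \log_2 m$; that is, for every subset $G'\subseteq G$ and every integer $N \ge \log_2 m$, the saturation procedure $\mathrm{Sat}_N(G')$ returns UNSATISFIABLE if and only if $G'$ is unsatisfiable over the reals.
   Context: Difference-logic predicates have the form $x \bowtie y + c$ where $x,y$ are real-valued variables, $\bowtie\in\{<,\le\}$ and $c$ is a real constant. The inference rules are: (a) from $X \le Z + C$ and $Z \bowtie Y + D$ derive $X \bowtie Y + (C+D)$; (b) from $X < Z + C$ and $Z \bowtie Y + D$ derive $X < Y + (C+D)$; (c) from $X < Y + C$ and $Y \bowtie X + D$ with $C+D \le 0$ derive $\bot$; (d) from $X \le Y + C$ and $Y \le X + D$ with $C + D < 0$ derive $\bot$; (e) from $X \le Y$ and $Y \le X$ derive $X = Y$. Saturation procedure $\mathrm{Sat}_N(H)$: (1) $W := H$. (2) Repeat $N$ times: $W' := W$; for every predicate $g\notin W'$ derivable in one rule application from predicates all in $W'$, add $g$ to $W$. (3) Return UNSATISFIABLE if $\bot$ is derivable in one rule application from predicates in $W$, else SATISFIABLE. $D_T(G)$ denotes the maximum over $G'\subseteq G$ of the least number $d$ such that $\mathrm{Sat}_N(G')$ correctly decides satisfiability of $G'$ for all $N\ge d$. *)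

(* Defs.v *)
From Stdlib Require Import Reals List Arith.
Import ListNotations.
Open Scope R_scope.

(* Variables are natural numbers.
   [DL s x y c] is the difference-logic predicate  x < y + c  (s = true)
   or  x <= y + c  (s = false).  [DLeq x y] is the equality  x = y,
   which can only arise from rule (e). *)
Inductive dl_pred : Type :=
  | DL (strict : bool) (x y : nat) (c : R)
  | DLeq (x y : nat).

Definition is_diff (p : dl_pred) : Prop :=
  match p with DL _ _ _ _ => True | DLeq _ _ => False end.

Definition holds (v : nat -> R) (p : dl_pred) : Prop :=
  match p with
  | DL true x y c => v x < v y + c
  | DL false x y c => v x <= v y + c
  | DLeq x y => v x = v y
  end.

Definition satisfiable (H : dl_pred -> Prop) : Prop :=
  exists v : nat -> R, forall p, H p -> holds v p.

Inductive derives (W : dl_pred -> Prop) : dl_pred -> Prop :=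
  | rule_a : forall x z y c d s,
      W (DL false x z c) -> W (DL s z y d) -> derives W (DL s x y (c + d))
  | rule_b : forall x z y c d s,
      W (DL true x z c) -> W (DL s z y d) -> derives W (DL true x y (c + d))
  | rule_e : forall x y,
      W (DL false x y 0) -> W (DL false y x 0) -> derives W (DLeq x y).

Inductive derives_bot (W : dl_pred -> Prop) : Prop :=
  | rule_c : forall x y c d s,
      W (DL true x y c) -> W (DL s y x d) -> c + d <= 0 -> derives_bot W
  | rule_d : forall x y c d,
      W (DL false x y c) -> W (DL false y x d) -> c + d < 0 -> derives_bot W.

Fixpoint sat_W (N : nat) (H : dl_pred -> Prop) : dl_pred -> Prop :=
  match N with
  | O => H
  | S n => fun g => sat_W n H g \/ derives (sat_W n H) g
  end.

Definition Sat_unsat (N : nat) (H : dl_pred -> Prop) : Prop :=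
  derives_bot (sat_W N H).

Definition pred_vars (p : dl_pred) : list nat :=
  match p with DL _ x y _ => [x; y] | DLeq x y => [x; y] end.

Definition num_vars (G : list dl_pred) : nat :=
  length (nodup Nat.eq_dec (flat_map pred_vars G)).

(* Main.v *)
Require Import Defs.
From Stdlib Require Import Reals List Lra Lia Classical Bool Arith.
Import ListNotations.
Open Scope R_scope.

Record edge := mkE { es : bool; ea : nat; eb : nat; ec : R }.

Fixpoint chain (x : nat) (l : list edge) (y : nat) : Prop :=
  match l with [] => x = y | e :: l' => ea e = x /\ chain (eb e) l' y end.
Fixpoint weight (l : list edge) : R :=
  match l with [] => 0 | e :: l' => ec e + weight l' end.
Fixpoint strict (l : list edge) : bool :=
  match l with [] => false | e :: l' => es e || strict l' end.
Definition negw (w : R) (s : bool) : Prop := w < 0 \/ (w <= 0 /\ s = true).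
Definition holdsE (v : nat -> R) (e : edge) : Prop :=
  if es e then v (ea e) < v (eb e) + ec e else v (ea e) <= v (eb e) + ec e.

Lemma chain_app : forall l1 l2 x y,
  chain x (l1 ++ l2) y <-> exists z, chain x l1 z /\ chain z l2 y.
Proof.
  induction l1 as [|e l1 IH]; intros l2 x y; simpl.
  - split; [intros H; exists x; auto | intros [z [-> H]]; auto].
  - rewrite IH. split.
    + intros [H1 [z [H2 H3]]]; exists z; auto.
    + intros [z [[H1 H2] H3]]; split; [auto| exists z; auto].
Qed.

Lemma weight_app : forall l1 l2, weight (l1 ++ l2) = weight l1 + weight l2.
Proof. induction l1; intros; simpl; [lra| rewrite IHl1; lra]. Qed.

Lemma strict_app : forall l1 l2, strict (l1 ++ l2) = strict l1 || strict l2.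
Proof. induction l1; intros; simpl; [reflexivity| rewrite IHl1, orb_assoc; reflexivity]. Qed.

Lemma negw_split : forall w1 w2 s1 s2, negw (w1 + w2) (s1 || s2) ->
  negw w1 s1 \/ negw w2 s2.
Proof.
  unfold negw; intros w1 w2 s1 s2 H.
  destruct (Rlt_le_dec w1 0); destruct (Rlt_le_dec w2 0); destruct s1, s2; simpl in *;
  first [left;left;lra | right;left;lra | left;right;split;[lra|reflexivity]
        | right;right;split;[lra|reflexivity]
        | (exfalso; destruct H as [H|[H H']]; [lra | discriminate || lra])].
Qed.

Definition lowOK (t : R) (p : R * bool) := if snd p then fst p < t else fst p <= t.
Definition upOK (t : R) (p : R * bool) := if snd p then t < fst p else t <= fst p.
Definition compat (p q : R * bool) :=
  if snd p || snd q then fst p < fst q else fst p <= fst q.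

Lemma below_all : forall Up : list (R * bool), exists a, forall q, In q Up -> a < fst q.
Proof.
  induction Up as [|q Up [a Ha]].
  - exists 0; intros q [].
  - exists (Rmin a (fst q - 1)); intros q' [<-|H].
    + pose proof (Rmin_r a (fst q - 1)); lra.
    + pose proof (Rmin_l a (fst q - 1)); specialize (Ha _ H); lra.
Qed.

Lemma between : forall a (Up : list (R * bool)), (forall q, In q Up -> a < fst q) ->
  exists t, a < t /\ forall q, In q Up -> t < fst q.
Proof.
  intros a; induction Up as [|q Up IH]; intros H.
  - exists (a + 1); split; [lra| intros q []].
  - destruct IH as [t [H1 H2]]; [intros; apply H; right; auto|].
    assert (Hq : a < fst q) by (apply H; left; auto).
    exists (Rmin t ((a + fst q) / 2)); split.
    + apply Rmin_glb_lt; lra.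
    + intros q' [<-|Hq'].
      * pose proof (Rmin_r t ((a + fst q) / 2)); lra.
      * pose proof (Rmin_l t ((a + fst q) / 2)); specialize (H2 _ Hq'); lra.
Qed.

Lemma dom_total : forall p q : R * bool,
  (forall t, lowOK t p -> lowOK t q) \/ (forall t, lowOK t q -> lowOK t p).
Proof.
  intros [a s] [b s']; unfold lowOK; simpl.
  destruct (Rtotal_order a b) as [H|[H|H]].
  - right; intros t; destruct s, s'; lra.
  - subst; destruct s; [left|right]; intros t; destruct s'; lra.
  - left; intros t; destruct s, s'; lra.
Qed.

Lemma strongest : forall Lo : list (R * bool), Lo <> [] ->
  exists p, In p Lo /\ forall p', In p' Lo -> forall t, lowOK t p -> lowOK t p'.
Proof.
  induction Lo as [|p0 Lo IH]; intros Hne; [congruence|].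
  destruct Lo as [|p1 Lo'].
  - exists p0; split; [left; auto|]. intros p' [<-|[]]; auto.
  - destruct IH as [p [Hp Hd]]; [congruence|].
    destruct (dom_total p0 p) as [H|H].
    + exists p0; split; [left; auto|]. intros p' [<-|Hp'] t Ht; auto.
    + exists p; split; [right; auto|]. intros p' [<-|Hp'] t Ht; auto.
Qed.

Lemma choose_t : forall Lo Up : list (R * bool),
  (forall p q, In p Lo -> In q Up -> compat p q) ->
  exists t, (forall p, In p Lo -> lowOK t p) /\ (forall q, In q Up -> upOK t q).
Proof.
  intros Lo Up Hc.
  destruct Lo as [|p0 Lo'].
  - destruct (below_all Up) as [a Ha]. exists a; split; [intros p []|].
    intros [u s] Hq; specialize (Ha _ Hq); unfold upOK; simpl in *; destruct s; lra.
  - destruct (strongest (p0 :: Lo')) as [[l s] [Hp Hd]]; [congruence|].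
    destruct s.
    + destruct (between l Up) as [t [H1 H2]].
      { intros q Hq; specialize (Hc _ _ Hp Hq); unfold compat in Hc; simpl in Hc; exact Hc. }
      exists t; split.
      * intros p' Hp'; apply (Hd p' Hp'); unfold lowOK; simpl; lra.
      * intros [u s'] Hq; specialize (H2 _ Hq); unfold upOK; simpl in *; destruct s'; lra.
    + exists l; split.
      * intros p' Hp'; apply (Hd p' Hp'); unfold lowOK; simpl; lra.
      * intros [u s'] Hq; specialize (Hc _ _ Hp Hq); unfold compat, upOK in *; simpl in *;
        destruct s'; simpl in *; lra.
Qed.
Definition comp (e1 e2 : edge) := mkE (es e1 || es e2) (ea e1) (eb e2) (ec e1 + ec e2).

Definition nonegcyc (L : list edge) : Prop :=
  forall x l, chain x l x -> l <> [] -> incl l L -> ~ negw (weight l) (strict l).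

Lemma fm : forall V L, (forall e, In e L -> In (ea e) V /\ In (eb e) V) ->
  nonegcyc L -> exists v, forall e, In e L -> holdsE v e.
Proof.
  induction V as [|z V IH]; intros L HV Hneg.
  - exists (fun _ => 0); intros e He; destruct (HV e He) as [[] _].
  - set (Lo_e := filter (fun e => Nat.eqb (eb e) z && negb (Nat.eqb (ea e) z)) L).
    set (Up_e := filter (fun e => Nat.eqb (ea e) z && negb (Nat.eqb (eb e) z)) L).
    set (Keep := filter (fun e => negb (Nat.eqb (ea e) z) && negb (Nat.eqb (eb e) z)) L).
    set (L' := Keep ++ flat_map (fun e1 => map (comp e1) Up_e) Lo_e).
    assert (HL' : forall e, In e L' -> (In e L /\ ea e <> z /\ eb e <> z) \/
       exists e1 e2, In e1 L /\ In e2 L /\ eb e1 = z /\ ea e2 = z /\ ea e1 <> z /\ eb e2 <> z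
         /\ e = comp e1 e2).
    { intros e He. unfold L' in He. apply in_app_iff in He as [He|He].
      - left. unfold Keep in He. apply filter_In in He as [He Hb].
        apply andb_true_iff in Hb as [H1 H2]. apply negb_true_iff, Nat.eqb_neq in H1.
        apply negb_true_iff, Nat.eqb_neq in H2. auto.
      - right. apply in_flat_map in He as [e1 [He1 He]]. apply in_map_iff in He as [e2 [<- He2]].
        unfold Lo_e in He1; unfold Up_e in He2.
        apply filter_In in He1 as [He1 Hb1]. apply filter_In in He2 as [He2 Hb2].
        apply andb_true_iff in Hb1 as [H1 H2]. apply negb_true_iff, Nat.eqb_neq in H2.
        apply Nat.eqb_eq in H1.
        apply andb_true_iff in Hb2 as [H3 H4]. apply negb_true_iff, Nat.eqb_neq in H4.
        apply Nat.eqb_eq in H3.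
        exists e1, e2; repeat split; auto. }
    assert (Hexp : forall l' x y, chain x l' y -> incl l' L' -> exists l, chain x l y /\
       incl l L /\ weight l = weight l' /\ strict l = strict l' /\ (l' <> [] -> l <> [])).
    { induction l' as [|e l' IHl]; intros x y Hc Hi.
      - exists []; simpl; repeat split; auto; intros a [].
      - simpl in Hc; destruct Hc as [Hx Hc].
        destruct (IHl _ _ Hc (fun a Ha => Hi a (or_intror Ha))) as (l & H1 & H2 & H3 & H4 & _).
        destruct (HL' e (Hi e (or_introl eq_refl))) as [[HeL _]|(e1&e2&He1&He2&Hz1&Hz2&_&_&->)].
        + exists (e :: l); simpl; repeat split; auto.
          * intros a [<-|Ha]; auto.
          * rewrite H3; auto.
          * rewrite H4; auto.
          * congruence.
        + exists (e1 :: e2 :: l); simpl in *; repeat split; auto.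
          * congruence.
          * intros a [<-|[<-|Ha]]; auto.
          * rewrite H3; lra.
          * rewrite H4, orb_assoc; auto.
          * congruence. }
    destruct (IH L') as [v' Hv'].
    { intros e He. destruct (HL' e He) as [[HeL [H1 H2]]|(e1&e2&He1&He2&_&_&H1&H2&->)].
      - destruct (HV e HeL) as [[|] [|]]; try congruence; auto.
      - simpl. destruct (HV e1 He1) as [[|] _]; destruct (HV e2 He2) as [_ [|]];
        try congruence; auto. }
    { intros x l' Hc Hne Hi Hn. destruct (Hexp l' x x Hc Hi) as (l & H1 & H2 & H3 & H4 & H5).
      apply (Hneg x l H1 (H5 Hne) H2). rewrite H3, H4; auto. }
    destruct (choose_t (map (fun e => (v' (ea e) - ec e, es e)) Lo_e)
                       (map (fun e => (v' (eb e) + ec e, es e)) Up_e)) as [t [Ht1 Ht2]].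
    { intros p q Hp Hq. apply in_map_iff in Hp as [e1 [<- He1]].
      apply in_map_iff in Hq as [e2 [<- He2]].
      assert (Hin : In (comp e1 e2) L').
      { unfold L'; apply in_app_iff; right; apply in_flat_map; exists e1; split; auto.
        apply in_map; auto. }
      specialize (Hv' _ Hin). unfold holdsE, compat in *; simpl in *.
      destruct (es e1 || es e2); lra. }
    exists (fun n => if Nat.eqb n z then t else v' n).
    intros e He. unfold holdsE.
    destruct (Nat.eqb (ea e) z) eqn:Ha; destruct (Nat.eqb (eb e) z) eqn:Hb.
    + apply Nat.eqb_eq in Ha; apply Nat.eqb_eq in Hb.
      assert (Hn := Hneg z [e]). simpl in Hn.
      assert (~ negw (ec e + 0) (es e || false)).
      { apply Hn; auto; [discriminate| intros a [<-|[]]; auto]. }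
      unfold negw in H. destruct (es e); simpl in H.
      * destruct (Rle_lt_dec (ec e) 0); [exfalso; apply H; right; split; auto; lra| lra].
      * destruct (Rle_lt_dec 0 (ec e)); [lra| exfalso; apply H; left; lra].
    + assert (Hin : In (v' (eb e) + ec e, es e) (map (fun e => (v' (eb e) + ec e, es e)) Up_e)).
      { apply (in_map (fun e0 => (v' (eb e0) + ec e0, es e0))); unfold Up_e; apply filter_In; split; auto. rewrite Ha, Hb; auto. }
      specialize (Ht2 _ Hin); unfold upOK in Ht2; simpl in Ht2.
      destruct (es e); lra.
    + assert (Hin : In (v' (ea e) - ec e, es e) (map (fun e => (v' (ea e) - ec e, es e)) Lo_e)).
      { apply (in_map (fun e0 => (v' (ea e0) - ec e0, es e0))); unfold Lo_e; apply filter_In; split; auto. rewrite Ha, Hb; auto. }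
      specialize (Ht1 _ Hin); unfold lowOK in Ht1; simpl in Ht1.
      destruct (es e); lra.
    + assert (Hin : In e L').
      { unfold L'; apply in_app_iff; left; unfold Keep; apply filter_In; split; auto.
        rewrite Ha, Hb; auto. }
      exact (Hv' e Hin).
Qed.
Lemma dup_split : forall l : list edge, ~ NoDup (map ea l) ->
  exists l1 e1 l2 e2 l3, l = l1 ++ e1 :: l2 ++ e2 :: l3 /\ ea e1 = ea e2.
Proof.
  induction l as [|e l IH]; intros H.
  - exfalso; apply H; constructor.
  - simpl in H. destruct (classic (In (ea e) (map ea l))) as [Hin|Hn].
    + apply in_map_iff in Hin as [e2 [He2 Hin]]. apply in_split in Hin as [l2 [l3 ->]].
      exists [], e, l2, e2, l3. split; [reflexivity| auto].
    + assert (H0 : ~ NoDup (map ea l)) by (intro; apply H; constructor; auto).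
      destruct (IH H0) as (l1&e1&l2&e2&l3&->&Heq).
      exists (e::l1), e1, l2, e2, l3. split; [reflexivity|auto].
Qed.

Lemma shorten : forall (L : list edge) n l x, (length l <= n)%nat -> chain x l x -> l <> [] ->
  incl l L -> negw (weight l) (strict l) ->
  exists l' x', chain x' l' x' /\ l' <> [] /\ incl l' L /\ negw (weight l') (strict l')
    /\ NoDup (map ea l').
Proof.
  intros L; induction n as [|n IH]; intros l x Hlen Hc Hne Hi Hn.
  - destruct l; simpl in Hlen; [congruence| lia].
  - destruct (classic (NoDup (map ea l))) as [Hd|Hd].
    + exists l, x; auto.
    + destruct (dup_split l Hd) as (l1&e1&l2&e2&l3&->&Heq).
      apply chain_app in Hc as [a [Hc1 Hc2]].
      simpl in Hc2; destruct Hc2 as [Ha Hc2].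
      apply chain_app in Hc2 as [b [Hc3 Hc4]].
      simpl in Hc4; destruct Hc4 as [Hb Hc4].
      rewrite weight_app, strict_app in Hn; simpl in Hn; rewrite weight_app, strict_app in Hn;
        simpl in Hn.
      assert (Hw : weight l1 + (ec e1 + (weight l2 + (ec e2 + weight l3))) =
                   (ec e1 + weight l2) + (weight l1 + (ec e2 + weight l3))) by ring.
      assert (Hs : strict l1 || (es e1 || (strict l2 || (es e2 || strict l3))) =
                   (es e1 || strict l2) || (strict l1 || (es e2 || strict l3))).
      { destruct (strict l1), (es e1), (strict l2), (es e2), (strict l3); reflexivity. }
      rewrite Hw, Hs in Hn.
      rewrite length_app in Hlen; simpl in Hlen; rewrite length_app in Hlen; simpl in Hlen.
      destruct (negw_split _ _ _ _ Hn) as [Hn1|Hn2].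
      * apply (IH (e1 :: l2) a); simpl; auto.
        -- lia.
        -- split; auto. congruence.
        -- discriminate.
        -- intros y Hy; apply Hi; repeat (rewrite in_app_iff in *; simpl in * ); tauto.
      * apply (IH (l1 ++ e2 :: l3) x).
        -- rewrite length_app; simpl; lia.
        -- apply chain_app; exists a; split; auto; simpl; split; auto; congruence.
        -- destruct l1; discriminate.
        -- intros y Hy; apply Hi; repeat (rewrite in_app_iff in *; simpl in * ); tauto.
        -- rewrite weight_app, strict_app; simpl; auto.
Qed.
Lemma sat_W_base : forall n (G' : dl_pred -> Prop) p, G' p -> sat_W n G' p.
Proof. induction n; intros; simpl; auto. Qed.

Lemma walk_sat : forall (G' : dl_pred -> Prop) (EL : list edge),
  (forall e, In e EL -> G' (DL (es e) (ea e) (eb e) (ec e))) ->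
  forall n l x y, chain x l y -> incl l EL -> l <> [] -> (length l <= 2 ^ n)%nat ->
  sat_W n G' (DL (strict l) x y (weight l)).
Proof.
  intros G' EL HE; induction n as [|n IH]; intros l x y Hc Hi Hne Hlen.
  - destruct l as [|e [|e' l]]; simpl in Hlen; try congruence; try lia.
    simpl in *. destruct Hc as [<- <-]. rewrite orb_false_r, Rplus_0_r.
    apply HE, Hi; left; auto.
  - destruct (le_lt_dec (length l) (2 ^ n)) as [Hl|Hl].
    + simpl; left; apply IH; auto.
    + assert (Hp : (1 <= 2 ^ n)%nat) by (apply Nat.neq_0_lt_0, Nat.pow_nonzero; lia).
      rewrite <- (firstn_skipn (2 ^ n) l) in Hc, Hi |- *.
      assert (H1 : length (firstn (2 ^ n) l) = (2 ^ n)%nat) by (apply firstn_length_le; lia).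
      assert (H2 : length (skipn (2 ^ n) l) = (length l - 2 ^ n)%nat) by apply length_skipn.
      set (l1 := firstn (2 ^ n) l) in *. set (l2 := skipn (2 ^ n) l) in *.
      simpl in Hlen.
      apply chain_app in Hc as [z [Hc1 Hc2]].
      assert (Hi1 : incl l1 EL) by (intros a Ha; apply Hi, in_app_iff; auto).
      assert (Hi2 : incl l2 EL) by (intros a Ha; apply Hi, in_app_iff; auto).
      assert (Hn1 : l1 <> []) by (intros E; rewrite E in H1; simpl in H1; lia).
      assert (Hn2 : l2 <> []) by (intros E; rewrite E in H2; simpl in H2; lia).
      assert (S1 := IH l1 x z Hc1 Hi1 Hn1 ltac:(lia)).
      assert (S2 := IH l2 z y Hc2 Hi2 Hn2 ltac:(lia)).
      rewrite weight_app, strict_app. simpl; right.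
      destruct (strict l1) eqn:Hs1; simpl.
      * eapply rule_b; eauto.
      * eapply rule_a; eauto.
Qed.

Lemma sublist_ex : forall (G : list dl_pred) (P : dl_pred -> Prop),
  exists L, forall p, In p L <-> In p G /\ P p.
Proof.
  induction G as [|a G IH]; intros P.
  - exists []; simpl; tauto.
  - destruct (IH P) as [L HL]. destruct (classic (P a)) as [Ha|Ha].
    + exists (a :: L); intros p; simpl; rewrite HL; split; [intros [<-|H]; tauto| ].
      intros [[<-|H] HP]; tauto.
    + exists L; intros p; simpl; rewrite HL; split; [tauto|].
      intros [[<-|H] HP]; tauto.
Qed.

Definition toE (p : dl_pred) : list edge :=
  match p with DL s x y c => [mkE s x y c] | DLeq _ _ => [] end.

Lemma sound : forall n (G' : dl_pred -> Prop) v, (forall p, G' p -> holds v p) ->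
  forall p, sat_W n G' p -> holds v p.
Proof.
  induction n; intros G' v H p Hp; simpl in Hp; auto.
  destruct Hp as [Hp|Hp]; [eapply IHn; eauto|].
  destruct Hp as [x z y c d s H1 H2|x z y c d s H1 H2|x y H1 H2];
    apply (IHn G' v H) in H1; apply (IHn G' v H) in H2; simpl in *;
    try destruct s; simpl in *; lra.
Qed.

Lemma ln_bound : forall m N, ln (INR m) / ln 2 <= INR N -> (m <= 2 ^ N)%nat.
Proof.
  intros m N H.
  destruct (le_lt_dec m (2 ^ N)) as [Hl|Hl]; auto. exfalso.
  apply lt_INR in Hl. rewrite pow_INR in Hl. simpl in Hl.
  assert (H2 : 0 < 2 ^ N) by (apply pow_lt; lra).
  assert (Hl2 : ln 1 < ln 2) by (apply ln_increasing; lra). rewrite ln_1 in Hl2.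
  assert (Hln := ln_increasing _ _ H2 Hl). rewrite ln_pow in Hln by lra.
  set (q := ln (INR m) / ln 2) in *.
  assert (Hq : ln (INR m) = q * ln 2) by (unfold q; field; lra).
  rewrite Hq in Hln. nra.
Qed.

Theorem proposition3p11 :
  forall G : list dl_pred,
    (forall p, In p G -> is_diff p) ->
    forall (G' : dl_pred -> Prop), (forall p, G' p -> In p G) ->
    forall N : nat, ln (INR (num_vars G)) / ln 2 <= INR N ->
      (Sat_unsat N G' <-> ~ satisfiable G').
Proof.
  intros G HG G' HG' N HN.
  split.
  - intros Hu [v Hv]. unfold Sat_unsat in Hu.
    destruct Hu as [x y c d s H1 H2 H|x y c d H1 H2 H];
      apply (sound N G' v Hv) in H1; apply (sound N G' v Hv) in H2; simpl in *;
      try destruct s; lra.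
  - intros Hns.
    destruct (sublist_ex G G') as [L HL].
    set (EL := flat_map toE L).
    assert (HEL : forall e, In e EL -> G' (DL (es e) (ea e) (eb e) (ec e))).
    { intros e He. apply in_flat_map in He as [p [Hp He]].
      apply HL in Hp as [_ Hp]. destruct p; simpl in He; [|contradiction].
      destruct He as [<-|[]]; simpl; auto. }
    set (V := flat_map pred_vars G).
    assert (HV : forall e, In e EL -> In (ea e) V /\ In (eb e) V).
    { intros e He. apply in_flat_map in He as [p [Hp He]].
      apply HL in Hp as [Hp _]. destruct p; simpl in He; [|contradiction].
      destruct He as [<-|[]]; simpl; unfold V; split; apply in_flat_map; exists (DL strict0 x y c);
      simpl; auto. }
    assert (Hcyc : ~ nonegcyc EL).
    { intros Hnc. destruct (fm V EL HV Hnc) as [v Hv]. apply Hns. exists v.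
      intros p Hp. pose proof (HG p (HG' p Hp)) as Hd. destruct p as [s x y c|]; [|contradiction].
      assert (Hin : In (mkE s x y c) EL).
      { apply in_flat_map; exists (DL s x y c); split; [apply HL; auto| simpl; auto]. }
      specialize (Hv _ Hin); unfold holdsE in Hv; simpl in Hv. destruct s; auto. }
    unfold nonegcyc in Hcyc.
    apply not_all_ex_not in Hcyc as [x Hcyc]. apply not_all_ex_not in Hcyc as [l Hcyc].
    apply imply_to_and in Hcyc as [Hc Hcyc]. apply imply_to_and in Hcyc as [Hne Hcyc].
    apply imply_to_and in Hcyc as [Hi Hn]. apply NNPP in Hn.
    destruct (shorten EL (length l) l x (le_n _) Hc Hne Hi Hn)
      as (l' & x' & Hc' & Hne' & Hi' & Hn' & Hnd).
    assert (Hlen : (length l' <= num_vars G)%nat).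
    { rewrite <- (length_map ea l'). unfold num_vars. apply NoDup_incl_length; auto.
      intros a Ha. apply nodup_In. apply in_map_iff in Ha as [e [<- He]].
      apply (HV e (Hi' e He)). }
    assert (Hb := ln_bound _ _ HN).
    unfold Sat_unsat.
    destruct l' as [|e r]; [congruence|].
    simpl in Hc'. destruct Hc' as [Hx Hr].
    assert (He : sat_W N G' (DL (es e) (ea e) (eb e) (ec e))).
    { apply sat_W_base, HEL, Hi'; left; auto. }
    destruct r as [|e' r].
    + simpl in Hr, Hn'. rewrite orb_false_r, Rplus_0_r in Hn'. subst.
      rewrite Hr in He. unfold negw in Hn'.
      destruct (es e) eqn:Hs.
      * eapply rule_c; [exact He | exact He | ]. destruct Hn' as [H|[H _]]; lra.
      * eapply rule_d; [exact He | exact He | ]. destruct Hn' as [H|[H H']]; [lra|discriminate].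
    + assert (Hr' : sat_W N G' (DL (strict (e' :: r)) (eb e) x' (weight (e' :: r)))).
      { apply (walk_sat G' EL HEL); auto.
        - intros a Ha; apply Hi'; right; auto.
        - discriminate.
        - simpl in Hlen |- *; lia. }
      change (weight (e :: e' :: r)) with (ec e + weight (e' :: r)) in Hn'.
      change (strict (e :: e' :: r)) with (es e || strict (e' :: r)) in Hn'.
      rewrite Hx in He.
      unfold negw in Hn'.
      destruct (es e) eqn:Hs.
      * eapply rule_c; [exact He | exact Hr' | ]. destruct Hn' as [H|[H _]]; lra.
      * destruct (strict (e' :: r)) eqn:Hs2.
        -- eapply rule_c; [exact Hr' | exact He | ]. destruct Hn' as [H|[H _]]; lra.
        -- eapply rule_d; [exact He | exact Hr' | ].
           destruct Hn' as [H|[H H']]; [lra|discriminate].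
Qed.
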